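(* For all complex $q$ with $|q|<1$, $$\psi(q^3)\psi(q^5)=\varphi(q^{60})\psi(q^8)+q^{14}\varphi(q^4)\psi(q^{120})+q^3\psi(q^{12})\psi(q^{20})+q^5\varphi(q^{40})\psi(q^{48})+q^9\varphi(q^{24})\psi(q^{80}),$$ $$\psi(q)\psi(q^{15})=\varphi(q^{120})\psi(q^{16})+q^{28}\varphi(q^8)\psi(q^{240})+q^6\psi(q^4)\psi(q^{60})+q\varphi(q^{20})\psi(q^{24})+q^3\varphi(q^{12})\psi(q^{40}).$$
   Context: Ramanujan's theta functions are $\varphi(q)=\sum_{n=-\infty}^{\infty}q^{n^2}$ and $\psi(q)=\sum_{n=0}^{\infty}q^{n(n+1)/2}$ for $|q|<1$. *)

(* Defs.v *)
From Stdlib Require Import Reals ZArith.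
From Coquelicot Require Import Coquelicot.
Open Scope C_scope.

Definition psi_partial (q : C) (N : nat) : C :=
  sum_n (fun n => q ^ (n * (n + 1) / 2)%nat) N.

(* Symmetric partial sums of phi: sum_{k=-N}^{N} q^{k^2}
   (index n = 0..2N corresponds to k = n - N). *)
Definition phi_partial (q : C) (N : nat) : C :=
  sum_n (fun n => q ^ Z.to_nat ((Z.of_nat n - Z.of_nat N) ^ 2)%Z) (2 * N)%nat.

(* Ramanujan's theta functions, as limits of the partial sums
   (the series converge absolutely for |q| < 1). *)
Definition psi (q : C) : C :=
  @lim C_CompleteNormedModule (filtermap (psi_partial q) eventually).

Definition phi (q : C) : C :=
  @lim C_CompleteNormedModule (filtermap (phi_partial q) eventually).

(* Main.v *)
Require Import Defs.
From Stdlib Require Import Reals ZArith Lia List Permutation Psatz.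
From Coquelicot Require Import Coquelicot.
Import ListNotations.
Local Open Scope bool_scope.
Open Scope C_scope.


Definition lsum {A} (f : A -> C) (l : list A) : C := fold_right (fun a s => f a + s) 0 l.

Lemma lsum_app {A} (f : A -> C) l1 l2 : lsum f (l1 ++ l2) = lsum f l1 + lsum f l2.
Proof. induction l1; simpl. ring. rewrite IHl1. ring. Qed.

Lemma lsum_map {A B} (f : B -> C) (g : A -> B) l : lsum f (map g l) = lsum (fun x => f (g x)) l.
Proof. induction l; simpl; auto. now rewrite IHl. Qed.

Lemma lsum_perm {A} (f : A -> C) l1 l2 : Permutation l1 l2 -> lsum f l1 = lsum f l2.
Proof. induction 1; simpl; auto. now rewrite IHPermutation. ring. congruence. Qed.

Lemma lsum_ext {A} (f g : A -> C) l : (forall x, In x l -> f x = g x) -> lsum f l = lsum g l.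
Proof. induction l; simpl; intros; auto. rewrite H, IHl; auto. Qed.

Lemma lsum_mul {A} (f : A -> C) c l : c * lsum f l = lsum (fun x => c * f x) l.
Proof. induction l; simpl. ring. rewrite <- IHl. ring. Qed.

Lemma lsum_prod {A B} (f : A -> C) (g : B -> C) l1 l2 :
  lsum (fun v => f (fst v) * g (snd v)) (list_prod l1 l2) = lsum f l1 * lsum g l2.
Proof. induction l1; simpl. ring. rewrite lsum_app, IHl1, lsum_map. simpl.
  rewrite <- lsum_mul. ring. Qed.

Lemma lsum_filter {A} (f : A -> C) p l : lsum f (filter p l) = lsum (fun x => if p x then f x else 0) l.
Proof. induction l; simpl; auto. destruct (p a); simpl; rewrite IHl; ring. Qed.

Lemma lsum_split {A} (f : A -> C) p Q l :
  lsum f (filter p l) = lsum f (filter (fun x => p x && Q x) l) + lsum f (filter (fun x => p x && negb (Q x)) l).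
Proof. induction l; simpl. ring. destruct (p a), (Q a); simpl; rewrite IHl; ring. Qed.

Lemma lsum_bound {A} (f : A -> C) l B : (forall x, In x l -> (Cmod (f x) <= B)%R) ->
  (Cmod (lsum f l) <= INR (length l) * B)%R.
Proof. induction l; intros H.
  - simpl. rewrite Cmod_0. lra.
  - change (length (a :: l)) with (S (length l)). rewrite S_INR. change (lsum f (a :: l)) with (f a + lsum f l).
    eapply Rle_trans. apply Cmod_triangle.
    assert (forall x, In x l -> (Cmod (f x) <= B)%R) by (intros; apply H; simpl; auto).
    assert (Cmod (lsum f l) <= INR (length l) * B)%R by auto. assert (Cmod (f a) <= B)%R by (apply H; simpl; auto). lra.
Qed.

Lemma NoDup_map_in {A B} (f : A -> B) l : NoDup l -> (forall x y, In x l -> In y l -> f x = f y -> x = y) -> NoDup (map f l).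
Proof. induction 1; simpl; intros Hi; constructor.
  - intro Hm. apply in_map_iff in Hm as [y [Hy1 Hy2]]. assert (y = x) by (apply Hi; auto). subst. tauto.
  - apply IHNoDup. intros; apply Hi; auto.
Qed.

Lemma NoDup_prod {A B} (l1 : list A) (l2 : list B) : NoDup l1 -> NoDup l2 -> NoDup (list_prod l1 l2).
Proof. induction 1; simpl; intros H2. constructor.
  apply NoDup_app; auto.
  - apply NoDup_map_in; auto. intros ? ? ? ? E; now inversion E.
  - intros [a b] H3 H4. apply in_map_iff in H3 as [y [E _]]. inversion E; subst.
    apply in_prod_iff in H4. tauto.
Qed.

Fixpoint zrange (n : nat) : list Z :=
  match n with O => [0%Z] | S m => (- Z.of_nat (S m))%Z :: zrange m ++ [Z.of_nat (S m)] end.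

Lemma In_zrange n x : In x (zrange n) <-> (Z.abs x <= Z.of_nat n)%Z.
Proof. induction n; simpl. split; [intros [H|[]]; lia| intros; left; lia].
  rewrite in_app_iff, IHn. simpl. lia. Qed.

Lemma NoDup_zrange n : NoDup (zrange n).
Proof. induction n; simpl. repeat constructor; simpl; tauto.
  constructor. rewrite in_app_iff, In_zrange. simpl. lia.
  apply Permutation_NoDup with (Z.of_nat (S n) :: zrange n). apply Permutation_cons_append.
  constructor; auto. rewrite In_zrange. lia. Qed.

Lemma length_zrange n : length (zrange n) = (2 * n + 1)%nat.
Proof. induction n; simpl; auto. rewrite length_app, IHn. simpl. lia. Qed.

Definition box n := list_prod (zrange n) (zrange n).

Definition TS (q : C) (P : Z * Z -> bool) (E : Z * Z -> nat) (K : nat) : C :=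
  lsum (fun v => q ^ E v) (filter (fun v => P v && Nat.ltb (E v) K) (box (4 * K + 1))).

Definition good (P : Z * Z -> bool) (E : Z * Z -> nat) := forall v, P v = true ->
  (Z.abs (fst v) <= 4 * Z.of_nat (E v) + 1 /\ Z.abs (snd v) <= 4 * Z.of_nat (E v) + 1)%Z.

Lemma In_TS P E K v : good P E -> In v (filter (fun v => P v && Nat.ltb (E v) K) (box (4 * K + 1))) <-> (P v = true /\ (E v < K)%nat).
Proof. intros G. rewrite filter_In. destruct v as [a b]. unfold box. rewrite in_prod_iff, !In_zrange.
  rewrite Bool.andb_true_iff, Nat.ltb_lt. split; [tauto|]. intros [H1 H2]. specialize (G _ H1). cbn [fst snd] in G. split; [lia|tauto]. Qed.

Lemma TS_bij q P E P' E' (f g : Z * Z -> Z * Z) K :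
  good P E -> good P' E' ->
  (forall v, P v = true -> P' (f v) = true /\ E' (f v) = E v) ->
  (forall w, P' w = true -> P (g w) = true /\ f (g w) = w) ->
  (forall v, P v = true -> g (f v) = v) ->
  TS q P E K = TS q P' E' K.
Proof. intros G G' H1 H2 H3. unfold TS.
  set (l1 := filter _ (box _)). set (l2 := filter (fun v => P' v && _) _).
  assert (Hp : Permutation (map f l1) l2).
  { apply NoDup_Permutation.
    - apply NoDup_map_in. apply NoDup_filter, NoDup_prod; apply NoDup_zrange.
      intros x y Hx Hy Hxy. unfold l1 in *. rewrite In_TS in Hx, Hy by auto.
      rewrite <- (H3 x), <- (H3 y) by tauto. congruence.
    - apply NoDup_filter, NoDup_prod; apply NoDup_zrange.
    - intros w. unfold l1, l2. rewrite in_map_iff. split.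
      + intros [v [<- Hv]]. rewrite In_TS in * by auto. destruct (H1 v) as [A B]; [tauto|]. rewrite B; tauto.
      + intros Hw. rewrite In_TS in Hw by auto. destruct (H2 w) as [A B]; [tauto|]. exists (g w). split; auto.
        rewrite In_TS by auto. destruct (H1 (g w)) as [_ C]; auto. rewrite B in C. rewrite <- C. tauto. }
  rewrite <- (lsum_perm _ _ _ Hp), lsum_map. apply lsum_ext. intros x Hx. unfold l1 in Hx. rewrite In_TS in Hx by auto.
  destruct (H1 x) as [_ ->]; tauto.
Qed.

Lemma TS_split q P Q E K : TS q P E K = TS q (fun v => P v && Q v) E K + TS q (fun v => P v && negb (Q v)) E K.
Proof. unfold TS. rewrite (lsum_split _ _ Q). f_equal; f_equal; apply filter_ext; intros; destruct (P a), (Q a), (E a <? K)%nat; reflexivity. Qed.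

Lemma good_and P Q E : good P E -> good (fun v => P v && Q v) E.
Proof. intros G v H. apply G. apply Bool.andb_true_iff in H. tauto. Qed.


Lemma lim_of (f : nat -> C) l : filterlim f eventually (locally l) ->
  @lim C_CompleteNormedModule (filtermap f eventually) = l.
Proof. intros H.
  assert (Hc : forall eps : posreal, filtermap f eventually (ball (@lim C_CompleteNormedModule (filtermap f eventually)) eps)).
  { apply complete_cauchy. apply filtermap_proper_filter, eventually_filter. intros eps. exists l. apply H. apply locally_ball. }
  symmetry. eapply (filterlim_locally_unique (FF := Proper_StrongProper _ eventually_filter)). exact H.
  apply filterlim_locally. exact Hc.
Qed.

Lemma lim_plus (u v : nat -> C) a b : filterlim u eventually (locally a) -> filterlim v eventually (locally b) ->
  filterlim (fun n => u n + v n) eventually (locally (a + b)).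
Proof. intros Hu Hv. eapply (filterlim_comp_2 (F:=eventually) u v (fun x y => plus x y)); eauto. apply (@filterlim_plus C_AbsRing C_NormedModule). Qed.

Lemma lim_of_bound (u : nat -> C) a (w : nat -> R) : is_lim_seq w 0%R -> (forall n, (Cmod (u n - a) <= w n)%R) ->
  filterlim u eventually (locally a).
Proof. intros Hw Hb. apply (filterlim_locally_ball_norm (K:=C_AbsRing) (U:=C_NormedModule)). intros eps.
  apply is_lim_seq_spec in Hw. destruct (Hw eps) as [N HN]. exists N. intros n Hn. specialize (HN n Hn).
  unfold ball_norm. change (Cmod (u n - a) < eps)%R. specialize (Hb n). rewrite Rminus_0_r in HN.
  apply Rabs_lt_between in HN. lra. Qed.

Lemma lim_to_norm (u : nat -> C) a : filterlim u eventually (locally a) -> is_lim_seq (fun n => Cmod (u n - a)) 0%R.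
Proof. intros H. apply is_lim_seq_spec. intros eps.
  apply (filterlim_locally_ball_norm (K:=C_AbsRing) (U:=C_NormedModule)) with (eps := eps) in H.
  destruct H as [N HN]. exists N. intros n Hn. specialize (HN n Hn). unfold ball_norm in HN.
  change (Cmod (u n - a) < eps)%R in HN. rewrite Rminus_0_r, Rabs_pos_eq by apply Cmod_ge_0. exact HN. Qed.

Lemma lim_mult (u v : nat -> C) a b : filterlim u eventually (locally a) -> filterlim v eventually (locally b) ->
  filterlim (fun n => u n * v n) eventually (locally (a * b)).
Proof. intros Hu Hv. apply lim_to_norm in Hu. apply lim_to_norm in Hv.
  apply lim_of_bound with (w := fun n => (Cmod (u n - a) * Cmod (v n - b) + Cmod a * Cmod (v n - b) + Cmod b * Cmod (u n - a))%R).
  - replace 0%R with (0 * 0 + Cmod a * 0 + Cmod b * 0)%R by ring.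
    apply is_lim_seq_plus'. apply is_lim_seq_plus'. apply is_lim_seq_mult'; auto.
    apply is_lim_seq_mult'; [apply is_lim_seq_const|auto]. apply is_lim_seq_mult'; [apply is_lim_seq_const|auto].
  - intros n. replace (u n * v n - a * b) with ((u n - a) * (v n - b) + a * (v n - b) + b * (u n - a)) by ring.
    eapply Rle_trans. apply Cmod_triangle. rewrite Cmod_mult.
    eapply Rle_trans. apply Rplus_le_compat_r. apply Cmod_triangle. rewrite !Cmod_mult. lra.
Qed.

Lemma lim_const (c : C) : filterlim (fun _ : nat => c) eventually (locally c).
Proof. apply filterlim_const. Qed.

Lemma lim_sub (u : nat -> C) a (phi : nat -> nat) : (forall n, (phi n < phi (S n))%nat) ->
  filterlim u eventually (locally a) -> filterlim (fun n => u (phi n)) eventually (locally a).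
Proof. intros Hp Hu. eapply filterlim_comp. apply eventually_subseq, Hp. exact Hu. Qed.

Lemma lim_ext (u v : nat -> C) a : (forall n, u n = v n) -> filterlim u eventually (locally a) -> filterlim v eventually (locally a).
Proof. intros H. apply filterlim_ext. exact H. Qed.

Lemma lim_unique (u : nat -> C) a b : filterlim u eventually (locally a) -> filterlim u eventually (locally b) -> a = b.
Proof. intros. eapply (filterlim_locally_unique (FF := Proper_StrongProper _ eventually_filter)). eauto. eauto. Qed.

Lemma inv_n1_lim : is_lim_seq (fun n => / (INR n + 1))%R 0%R.
Proof.
  assert (H : is_lim_seq (fun n => INR n + 1)%R p_infty).
  { eapply is_lim_seq_ext with (u := fun n => INR (S n)). 2: apply -> is_lim_seq_incr_1; apply is_lim_seq_INR. intros n; cbv beta; rewrite S_INR. reflexivity. }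
  apply is_lim_seq_inv in H. simpl in H. exact H. discriminate.
Qed.

Lemma poly_geom (s : R) : (0 < s < 1)%R -> is_lim_seq (fun n => (INR n + 1)^2 * s^n)%R 0%R.
Proof. intros Hs.
  set (a := fun n => ((INR n + 1)^2 * s^n)%R).
  assert (Hpos : forall n, (0 < a n)%R).
  { intros n. unfold a. pose proof (pos_INR n). apply Rmult_lt_0_compat; apply pow_lt; lra. }
  assert (Hr : is_lim_seq (fun n => Rabs (a (S n) / a n)) s).
  { apply is_lim_seq_ext with (u := fun n => ((1 + / (INR n + 1)) * (1 + / (INR n + 1)) * s)%R).
    - intros n. rewrite Rabs_pos_eq. unfold a. rewrite S_INR. pose proof (pos_INR n). simpl. field. split; [apply pow_nonzero|]; lra.
      left. unfold Rdiv. apply Rmult_lt_0_compat. auto. apply Rinv_0_lt_compat. auto.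
    - assert (E : ((1 + 0) * (1 + 0) * s = s)%R) by ring. rewrite <- E at 1.
      apply is_lim_seq_mult'. apply is_lim_seq_mult'; apply is_lim_seq_plus'; try apply is_lim_seq_const; apply inv_n1_lim.
      apply is_lim_seq_const. }
  assert (He := ex_series_DAlembert a s ltac:(lra) (fun n => Rgt_not_eq _ _ (Hpos n)) Hr).
  apply ex_series_lim_0 in He. eapply is_lim_seq_ext. 2: exact He. intros n. apply Rabs_pos_eq. left; auto.
Qed.

Lemma pow_mono_dec (r : R) n m : (0 <= r <= 1)%R -> (n <= m)%nat -> (r ^ m <= r ^ n)%R.
Proof. intros Hr Hnm. replace m with (n + (m - n))%nat by lia. rewrite pow_add.
  assert (r ^ (m - n) <= 1)%R. { rewrite <- (pow1 (m - n)). apply pow_incr. lra. }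
  assert (0 <= r ^ n)%R by (apply pow_le; lra). nra. Qed.

Definition s1 (q : C) (p : Z -> bool) (e : Z -> nat) (M : nat) : C :=
  lsum (fun x => if p x then q ^ e x else 0) (zrange M).

Lemma TS_prod q p1 p2 c e1 e2 A B :
  (Cmod q < 1)%R ->
  good (fun v => p1 (fst v) && p2 (snd v)) (fun v => c + e1 (fst v) + e2 (snd v))%nat ->
  filterlim (fun K => s1 q p1 e1 (4*K+1)) eventually (locally A) ->
  filterlim (fun K => s1 q p2 e2 (4*K+1)) eventually (locally B) ->
  filterlim (TS q (fun v => p1 (fst v) && p2 (snd v)) (fun v => c + e1 (fst v) + e2 (snd v))%nat) eventually (locally (q^c * A * B)).
Proof. intros Hq G HA HB.
  set (P := fun v : Z * Z => p1 (fst v) && p2 (snd v)).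
  set (E := fun v : Z * Z => (c + e1 (fst v) + e2 (snd v))%nat).
  set (Full := fun K => lsum (fun v => q ^ E v) (filter P (box (4 * K + 1)))).
  set (Rst := fun K => lsum (fun v => q ^ E v) (filter (fun v => P v && negb (Nat.ltb (E v) K)) (box (4 * K + 1)))).
  assert (HF : forall K, Full K = q ^ c * s1 q p1 e1 (4*K+1) * s1 q p2 e2 (4*K+1)).
  { intros K. unfold Full, s1, box. rewrite lsum_filter, <- Cmult_assoc, <- lsum_prod, lsum_mul. apply lsum_ext.
    intros [x y] _. unfold P, E. simpl. destruct (p1 x), (p2 y); simpl; rewrite ?Cpow_add_r; ring. }
  assert (HS : forall K, TS q P E K = Full K - Rst K).
  { intros K. unfold Full, Rst, TS. rewrite (lsum_split _ P (fun v => Nat.ltb (E v) K)). ring. }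
  set (r := Cmod q). set (sg := ((1 + r) / 2)%R).
  assert (Hr0 : (0 <= r)%R) by apply Cmod_ge_0.
  assert (HR : forall K, (Cmod (Rst K) <= 64 * ((INR K + 1)^2 * sg ^ K))%R).
  { intros K. unfold Rst. eapply Rle_trans. apply lsum_bound with (B := (sg ^ K)%R).
    - intros v Hv. apply filter_In in Hv as [_ Hv]. apply Bool.andb_true_iff in Hv as [_ Hv].
      apply Bool.negb_true_iff, Nat.ltb_ge in Hv. rewrite Cmod_pow. eapply Rle_trans.
      apply (pow_mono_dec _ K (E v)); [pose proof (Cmod_ge_0 q); unfold r; split; lra | lia]. apply pow_incr. pose proof (Cmod_ge_0 q); unfold sg, r; split; lra.
    - rewrite <- Rmult_assoc. apply Rmult_le_compat_r. apply pow_le. unfold sg; lra.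
      eapply Rle_trans. apply le_INR, filter_length_le. unfold box. rewrite length_prod, length_zrange.
      replace (64 * (INR K + 1) ^ 2)%R with (INR (64 * (K + 1) * (K + 1))).
      apply le_INR. nia. rewrite !mult_INR, plus_INR. simpl. ring. }
  rewrite <- (Cplus_0_r (q ^ c * A * B)).
  apply lim_of_bound with (w := fun K => (Cmod (Full K - q ^ c * A * B) + 64 * ((INR K + 1)^2 * sg ^ K))%R).
  - replace 0%R with (0 + 64 * 0)%R by ring. apply is_lim_seq_plus'.
    + apply lim_to_norm. eapply lim_ext. intros K; symmetry; apply HF. apply lim_mult; auto. apply lim_mult; auto. apply lim_const.
    + apply is_lim_seq_mult'. apply is_lim_seq_const. apply poly_geom. pose proof (Cmod_ge_0 q); unfold sg, r; split; lra.
  - intros K. rewrite Cplus_0_r. fold P E. rewrite HS.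
    replace (Full K - Rst K - q ^ c * A * B) with ((Full K - q ^ c * A * B) + (- Rst K)) by ring.
    eapply Rle_trans. apply Cmod_triangle. rewrite Cmod_opp. specialize (HR K). lra.
Qed.


Definition od (x : Z) : bool := Z.eqb (x mod 2) 1.
Definition t (x : Z) : nat := Z.to_nat ((x * x - 1) / 8).
Definition sq (x : Z) : nat := Z.to_nat (x * x).
Definition Tn (n : nat) : nat := (n * (n + 1) / 2)%nat.

Lemma div8 a m : a = (8 * m)%Z -> (a / 8 = m)%Z.
Proof. intros ->. rewrite Z.mul_comm. apply Z.div_mul. lia. Qed.

Lemma t_spec x : od x = true -> (8 * Z.of_nat (t x) = x * x - 1)%Z.
Proof. unfold od, t. rewrite Z.eqb_eq. intros H.
  assert (Hx : x = (2 * (x / 2) + 1)%Z) by (Z.div_mod_to_equations; lia). set (k := (x / 2)%Z) in *.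
  assert (Hk : k = (2 * (k / 2))%Z \/ k = (2 * (k / 2) + 1)%Z) by (Z.div_mod_to_equations; lia). set (j := (k / 2)%Z) in *.
  clearbody k j. destruct Hk as [Hk|Hk].
  - rewrite (div8 _ (j * (2 * j + 1))). rewrite Z2Nat.id. subst; ring.
    destruct (Z_le_gt_dec 0 j); nia. rewrite Hx, Hk. ring.
  - rewrite (div8 _ ((2 * j + 1) * (j + 1))). rewrite Z2Nat.id. subst; ring.
    destruct (Z_le_gt_dec 0 j); nia. rewrite Hx, Hk. ring.
Qed.

Lemma sq_spec x : Z.of_nat (sq x) = (x * x)%Z.
Proof. unfold sq. rewrite Z2Nat.id; nia. Qed.

Lemma Tn_spec n : (2 * Tn n = n * (n + 1))%nat.
Proof. unfold Tn. destruct (Nat.even n) eqn:E.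
  - apply Nat.even_spec in E as [m ->]. replace (2 * m * (2 * m + 1))%nat with ((m * (2 * m + 1)) * 2)%nat by ring.
    rewrite Nat.div_mul; lia.
  - assert (Nat.odd n = true) by (rewrite <- Nat.negb_even, E; auto). apply Nat.odd_spec in H as [m ->].
    replace ((2 * m + 1) * (2 * m + 1 + 1))%nat with (((2 * m + 1) * (m + 1)) * 2)%nat by ring.
    rewrite Nat.div_mul; lia.
Qed.

Lemma Tn_ge n : (n <= Tn n)%nat.
Proof. pose proof (Tn_spec n). nia. Qed.

Lemma t_odd n : t (Z.of_nat (2 * n + 1)) = Tn n /\ t (- Z.of_nat (2 * n + 1)) = Tn n.
Proof. pose proof (Tn_spec n).
  assert (forall x, (x * x = Z.of_nat (2 * n + 1) * Z.of_nat (2 * n + 1))%Z -> t x = Tn n).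
  { intros x Hx. unfold t. rewrite Hx. rewrite (div8 _ (Z.of_nat (Tn n))). apply Nat2Z.id.
    apply (f_equal Z.of_nat) in H. rewrite Nat2Z.inj_mul in H. lia. }
  split; apply H0; ring.
Qed.

Lemma od_true x : (x mod 2 = 1)%Z -> od x = true.
Proof. intros; unfold od; apply Z.eqb_eq; auto. Qed.
Lemma od_false x : (x mod 2 = 0)%Z -> od x = false.
Proof. intros; unfold od; apply Z.eqb_neq; lia. Qed.

Lemma lsum_cons {A} (f : A -> C) x l : lsum f (x :: l) = f x + lsum f l.
Proof. reflexivity. Qed.
Lemma lsum_nil {A} (f : A -> C) : lsum f [] = 0.
Proof. reflexivity. Qed.

Lemma psi_s1 q a N : s1 q od (fun x => (a * t x)%nat) (2 * N + 1) = 2 * psi_partial (q ^ a) N.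
Proof. induction N.
  - unfold s1. simpl. unfold psi_partial. rewrite sum_O.
    replace (t (-1)) with 0%nat by reflexivity. replace (t 1) with 0%nat by reflexivity.
    rewrite Nat.mul_0_r. simpl. ring.
  - replace (2 * S N + 1)%nat with (S (S (2 * N + 1))) by lia. unfold s1 in *. cbn [zrange].
    rewrite !lsum_cons, !lsum_app, !lsum_cons, !lsum_app, !lsum_cons, !lsum_nil, IHN.
    rewrite (od_true (- Z.of_nat (S (S (2 * N + 1))))) by (Z.div_mod_to_equations; lia).
    rewrite (od_true (Z.of_nat (S (S (2 * N + 1))))) by (Z.div_mod_to_equations; lia).
    rewrite (od_false (- Z.of_nat (S (2 * N + 1)))) by (Z.div_mod_to_equations; lia).
    rewrite (od_false (Z.of_nat (S (2 * N + 1)))) by (Z.div_mod_to_equations; lia).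
    replace (S (S (2 * N + 1))) with (2 * S N + 1)%nat by lia.
    destruct (t_odd (S N)) as [-> ->]. unfold psi_partial. rewrite sum_Sn. rewrite Cpow_mult_r.
    change plus with Cplus. unfold Tn. ring.
Qed.


Lemma Cpow_lt1 (q : C) a : (Cmod q < 1)%R -> (1 <= a)%nat -> (Cmod (q ^ a) < 1)%R.
Proof. intros Hq Ha. rewrite Cmod_pow. eapply Rle_lt_trans. apply (pow_mono_dec _ 1 a).
  pose proof (Cmod_ge_0 q); split; lra. auto. simpl. lra. Qed.

Lemma series_conv (z : C) (e : nat -> nat) : (Cmod z < 1)%R -> (forall n, n <= e n)%nat ->
  exists l, filterlim (sum_n (fun n => z ^ e n)) eventually (locally l).
Proof. intros Hz He.
  assert (Hs : ex_series (fun n => z ^ e n)).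
  { apply (@ex_series_le C_AbsRing C_CompleteNormedModule) with (b := fun n => (Cmod z ^ n)%R).
    - intros n. change (norm (z ^ e n)) with (Cmod (z ^ e n)). rewrite Cmod_pow.
      apply pow_mono_dec; auto. pose proof (Cmod_ge_0 z); split; lra.
    - apply ex_series_geom. rewrite Rabs_pos_eq; auto. apply Cmod_ge_0. }
  destruct Hs as [l Hl]. exists l. exact Hl.
Qed.

Lemma psi_conv (z : C) : (Cmod z < 1)%R -> filterlim (psi_partial z) eventually (locally (psi z)).
Proof. intros Hz. destruct (series_conv z Tn Hz Tn_ge) as [l Hl].
  unfold psi. rewrite (lim_of _ l). exact Hl. exact Hl. Qed.

Lemma psi_lim q a : (Cmod q < 1)%R -> (1 <= a)%nat ->
  filterlim (fun K => s1 q od (fun x => (a * t x)%nat) (4 * K + 1)) eventually (locally (2 * psi (q ^ a))).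
Proof. intros Hq Ha. apply lim_ext with (u := fun K => 2 * psi_partial (q ^ a) (2 * K)).
  intros K. rewrite <- psi_s1. f_equal. lia.
  apply lim_mult. apply lim_const. apply lim_sub with (u := psi_partial (q ^ a)) (phi := fun K => (2 * K)%nat).
  intros; lia. apply psi_conv, Cpow_lt1; auto.
Qed.

Lemma sum_n_seq (f : nat -> C) m : @eq C (sum_n f m) (lsum f (seq 0 (S m))).
Proof. induction m. rewrite sum_O. simpl. ring.
  rewrite sum_Sn, seq_S, lsum_app. change plus with Cplus. rewrite IHm. simpl. ring. Qed.

Lemma phi_partial_zrange z N : phi_partial z N = lsum (fun k => z ^ sq k) (zrange N).
Proof. unfold phi_partial. rewrite sum_n_seq.
  transitivity (lsum (fun k => z ^ sq k) (map (fun n => (Z.of_nat n - Z.of_nat N)%Z) (seq 0 (S (2 * N))))).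
  - rewrite lsum_map. apply lsum_ext. intros n _. f_equal. unfold sq. f_equal. ring.
  - apply lsum_perm. apply NoDup_Permutation.
    + apply NoDup_map_in. apply seq_NoDup. intros x y _ _ H. lia.
    + apply NoDup_zrange.
    + intros x. rewrite in_map_iff, In_zrange. split.
      * intros [n [<- Hn]]. apply in_seq in Hn. lia.
      * intros Hx. exists (Z.to_nat (x + Z.of_nat N)). rewrite in_seq. lia.
Qed.

Lemma phi_zrange z N : lsum (fun k => z ^ sq k) (zrange N) = 2 * sum_n (fun k => z ^ (k * k)) N - 1.
Proof. induction N.
  - simpl. rewrite sum_O. simpl. replace (sq 0) with 0%nat by reflexivity. simpl. ring.
  - cbn [zrange]. rewrite lsum_cons, lsum_app, lsum_cons, lsum_nil, IHN, sum_Sn. change plus with Cplus.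
    replace (sq (- Z.of_nat (S N))) with (S N * S N)%nat. replace (sq (Z.of_nat (S N))) with (S N * S N)%nat. ring.
    all: apply Nat2Z.inj; rewrite sq_spec; lia.
Qed.

Lemma phi_conv (z : C) : (Cmod z < 1)%R -> filterlim (phi_partial z) eventually (locally (phi z)).
Proof. intros Hz. destruct (series_conv z (fun k => k * k)%nat Hz ltac:(intros n; cbv beta; destruct n; simpl; lia)) as [l Hl].
  assert (H : filterlim (phi_partial z) eventually (locally (2 * l - 1))).
  { apply lim_ext with (u := fun N => 2 * sum_n (fun k => z ^ (k * k)) N + Copp 1).
    intros N. rewrite phi_partial_zrange, phi_zrange. ring.
    change (2 * l - 1) with (2 * l + Copp 1). apply lim_plus. apply lim_mult. apply lim_const. exact Hl. apply lim_const. }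
  unfold phi. rewrite (lim_of _ _ H). exact H.
Qed.

Lemma phi_lim q a : (Cmod q < 1)%R -> (1 <= a)%nat ->
  filterlim (fun K => s1 q (fun _ => true) (fun x => (a * sq x)%nat) (4 * K + 1)) eventually (locally (phi (q ^ a))).
Proof. intros Hq Ha. apply lim_ext with (u := fun K => phi_partial (q ^ a) (4 * K + 1)).
  intros K. rewrite phi_partial_zrange. unfold s1. apply lsum_ext. intros. symmetry; apply Cpow_mult_r.
  apply lim_sub with (u := phi_partial (q ^ a)) (phi := fun K => (4 * K + 1)%nat).
  intros; lia. apply phi_conv, Cpow_lt1; auto.
Qed.


Lemma quad_help (x e : Z) : (0 <= e)%Z -> (x * x <= 24 * e + 1)%Z -> (Z.abs x <= 4 * e + 1)%Z.
Proof. intros He H. destruct (Z_le_gt_dec (Z.abs x) (4 * e + 1)); auto. exfalso.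
  assert (Ha : (Z.abs x * Z.abs x = x * x)%Z) by (rewrite <- Z.abs_mul; apply Z.abs_eq; nia).
  set (a := Z.abs x) in *. assert (a * a >= (4 * e + 2) * (4 * e + 2))%Z by nia. nia. Qed.

Lemma good_of_quad (P : Z * Z -> bool) E : (forall x y, P (x, y) = true ->
  (x * x <= 24 * Z.of_nat (E (x, y)) + 1 /\ y * y <= 24 * Z.of_nat (E (x, y)) + 1)%Z) -> good P E.
Proof. intros H [x y] Hp. specialize (H x y Hp). cbn [fst snd].
  split; apply quad_help; try lia; tauto. Qed.

Lemma TS_ext q P P' E K : (forall v, P v = P' v) -> TS q P E K = TS q P' E K.
Proof. intros H. unfold TS. f_equal. apply filter_ext. intros v. rewrite H. auto. Qed.

Lemma TS_part q P P1 P2 E K : (forall v, (P1 v = true \/ P2 v = true <-> P v = true) /\ ~ (P1 v = true /\ P2 v = true)) ->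
  TS q P E K = TS q P1 E K + TS q P2 E K.
Proof. intros H. rewrite (TS_split q P P1). f_equal; apply TS_ext; intros v; specialize (H v);
  destruct (P v), (P1 v), (P2 v); simpl; intuition congruence. Qed.

Ltac bsimpl := unfold od in *; cbn [fst snd] in *; repeat (rewrite ?Bool.andb_true_r, ?Bool.andb_true_l, ?Bool.andb_true_iff, ?Bool.negb_true_iff, ?Bool.orb_true_iff,
  ?Z.eqb_eq, ?Z.eqb_neq in *); cbn [fst snd] in *.

Ltac zsolve := Z.div_mod_to_equations; lia.

Ltac tgen := repeat match goal with
  | |- context [Z.of_nat (t ?e)] => let T := fresh "T" in let H := fresh "HT" in
       let H0 := fresh "HT" in
       assert (H : (8 * Z.of_nat (t e) = e * e - 1)%Z) by (apply t_spec; unfold od; apply Z.eqb_eq; zsolve);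
       assert (H0 : (0 <= Z.of_nat (t e))%Z) by lia;
       generalize dependent (Z.of_nat (t e)); intros T H H0
  | |- context [Z.of_nat (sq ?e)] => rewrite (sq_spec e)
  end.

Ltac expo := apply Nat2Z.inj; rewrite ?Nat2Z.inj_add, ?Nat2Z.inj_mul; tgen; nia.

Ltac quad := apply good_of_quad; intros ? ? ?; bsimpl; rewrite ?Nat2Z.inj_add, ?Nat2Z.inj_mul; tgen; split; nia.

Ltac quadm := apply good_of_quad; intros b m ?; bsimpl; rewrite ?Nat2Z.inj_add, ?Nat2Z.inj_mul; tgen;
  let s := constr:((b + 2 + 4 * m)%Z) in
  assert (Hsq : (3 * (s * s + b * b + 4) - 16 * m * m = (s + b) * (s + b) + (s + 2) * (s + 2) + (b - 2) * (b - 2))%Z) by ring;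
  assert (0 <= (s + b) * (s + b))%Z by apply Z.square_nonneg; assert (0 <= (s + 2) * (s + 2))%Z by apply Z.square_nonneg;
  assert (0 <= (b - 2) * (b - 2))%Z by apply Z.square_nonneg;
  split; nia.

Ltac part := intros [? ?]; bsimpl; split; [split; [intros [?|?]|intros]|intros [? ?]]; bsimpl; zsolve.

Definition PL1 (v : Z * Z) := od (fst v) && od (snd v).
Definition EL1 (v : Z * Z) := (0 + 3 * t (fst v) + 5 * t (snd v))%nat.
Definition Ra (v : Z * Z) := ((fst v - snd v) mod 8 =? 0)%Z.
Definition Rb (v : Z * Z) := ((fst v + snd v) mod 8 =? 0)%Z.
Definition Rc (v : Z * Z) := ((snd v - 3 * fst v) mod 8 =? 0)%Z.
Definition Rd (v : Z * Z) := ((snd v + 3 * fst v) mod 8 =? 0)%Z.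
Definition Pa1 v := PL1 v && Ra v && ((3 * fst v + 5 * snd v) mod 16 =? 8)%Z.
Definition Pa2 v := PL1 v && Ra v && ((3 * fst v + 5 * snd v) mod 16 =? 0)%Z.
Definition Pb1 v := PL1 v && Rb v && ((3 * fst v - 5 * snd v) mod 16 =? 8)%Z.
Definition Pb2 v := PL1 v && Rb v && ((3 * fst v - 5 * snd v) mod 16 =? 0)%Z.
Definition Pc1 v := PL1 v && Rc v && ((fst v + 5 * snd v) mod 16 =? 8)%Z.
Definition Pc2 v := PL1 v && Rc v && ((fst v + 5 * snd v) mod 32 =? 16)%Z.
Definition Pc3 v := PL1 v && Rc v && ((fst v + 5 * snd v) mod 32 =? 0)%Z.
Definition Pd1 v := PL1 v && Rd v && ((fst v - 5 * snd v) mod 16 =? 8)%Z.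
Definition Pd2 v := PL1 v && Rd v && ((fst v - 5 * snd v) mod 32 =? 16)%Z.
Definition Pd3 v := PL1 v && Rd v && ((fst v - 5 * snd v) mod 32 =? 0)%Z.

Definition Ta1 (v : Z * Z) := od (fst v) && true.
Definition Ea1 (v : Z * Z) := (0 + 8 * t (fst v) + 60 * sq (snd v))%nat.
Definition Ta2 (v : Z * Z) := true && od (snd v).
Definition Ea2 (v : Z * Z) := (14 + 4 * sq (fst v) + 120 * t (snd v))%nat.
Definition Tm (v : Z * Z) := od (fst v) && true.
Definition Emc (v : Z * Z) := (3 + 12 * t (fst v + 2 + 4 * snd v) + 20 * t (fst v))%nat.
Definition Emd (v : Z * Z) := (3 + 12 * t (fst v + 2 + 4 * snd v) + 20 * t (- fst v))%nat.
Definition Soo (v : Z * Z) := od (fst v) && od (snd v).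
Definition Soo2 (v : Z * Z) := od (fst v) && od (snd v) && ((fst v - snd v) mod 4 =? 2)%Z.
Definition Soo0 (v : Z * Z) := od (fst v) && od (snd v) && negb ((fst v - snd v) mod 4 =? 2)%Z.
Definition Eoo (v : Z * Z) := (3 + 12 * t (fst v) + 20 * t (snd v))%nat.
Definition Tc2 (v : Z * Z) := od (fst v) && true.
Definition Ec2 (v : Z * Z) := (5 + 48 * t (fst v) + 40 * sq (snd v))%nat.
Definition Tc3 (v : Z * Z) := true && od (snd v).
Definition Ec3 (v : Z * Z) := (9 + 24 * sq (fst v) + 80 * t (snd v))%nat.

Ltac unf1 := unfold Pa1, Pa2, Pb1, Pb2, Pc1, Pc2, Pc3, Pd1, Pd2, Pd3, PL1, EL1, Ra, Rb, Rc, Rd,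
  Ta1, Ea1, Ta2, Ea2, Tm, Emc, Emd, Soo, Soo2, Soo0, Eoo, Tc2, Ec2, Tc3, Ec3 in *.

Ltac bij ff gg := apply TS_bij with (f := ff) (g := gg); unf1;
  [first [quad|quadm]|quad| intros [x y] H; bsimpl; split; [zsolve|expo] | intros [x y] H; bsimpl; split; [zsolve| f_equal; zsolve]
   | intros [x y] H; bsimpl; f_equal; zsolve].

Lemma bij_a1 q K : TS q Ta1 Ea1 K = TS q Pa1 EL1 K.
Proof. bij (fun v => (fst v - 10 * snd v, fst v + 6 * snd v)%Z) (fun w => ((3 * fst w + 5 * snd w) / 8, (snd w - fst w) / 16)%Z). Qed.
Lemma bij_a2 q K : TS q Ta2 Ea2 K = TS q Pa2 EL1 K.
Proof. bij (fun v => (2 * fst v - 5 * snd v, 2 * fst v + 3 * snd v)%Z) (fun w => ((3 * fst w + 5 * snd w) / 16, (snd w - fst w) / 8)%Z). Qed.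
Lemma bij_b1 q K : TS q Ta1 Ea1 K = TS q Pb1 EL1 K.
Proof. bij (fun v => (fst v - 10 * snd v, - (fst v + 6 * snd v))%Z) (fun w => ((3 * fst w - 5 * snd w) / 8, (- snd w - fst w) / 16)%Z). Qed.
Lemma bij_b2 q K : TS q Ta2 Ea2 K = TS q Pb2 EL1 K.
Proof. bij (fun v => (2 * fst v - 5 * snd v, - (2 * fst v + 3 * snd v))%Z) (fun w => ((3 * fst w - 5 * snd w) / 16, (- snd w - fst w) / 8)%Z). Qed.
Lemma bij_c1 q K : TS q Tm Emc K = TS q Pc1 EL1 K.
Proof. bij (fun v => (1 + 2 * snd v - 2 * fst v, 2 * fst v + 3 + 6 * snd v)%Z) (fun w => ((snd w - 3 * fst w) / 8, (fst w + snd w - 4) / 8)%Z). Qed.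
Lemma bij_c1' q K : TS q Tm Emc K = TS q Soo2 Eoo K.
Proof. bij (fun v => (fst v + 2 + 4 * snd v, fst v)%Z) (fun w => (snd w, (fst w - snd w - 2) / 4)%Z). Qed.
Lemma bij_d1 q K : TS q Tm Emd K = TS q Pd1 EL1 K.
Proof. bij (fun v => (1 + 2 * snd v - 2 * fst v, - (2 * fst v + 3 + 6 * snd v))%Z) (fun w => ((- snd w - 3 * fst w) / 8, (fst w - snd w - 4) / 8)%Z). Qed.
Lemma bij_d1' q K : TS q Tm Emd K = TS q Soo0 Eoo K.
Proof. bij (fun v => (fst v + 2 + 4 * snd v, - fst v)%Z) (fun w => (- snd w, (fst w + snd w - 2) / 4)%Z). Qed.
Lemma bij_c2 q K : TS q Tc2 Ec2 K = TS q Pc2 EL1 K.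
Proof. bij (fun v => (fst v - 10 * snd v, 3 * fst v + 2 * snd v)%Z) (fun w => ((fst w + 5 * snd w) / 16, (snd w - 3 * fst w) / 32)%Z). Qed.
Lemma bij_c3 q K : TS q Tc3 Ec3 K = TS q Pc3 EL1 K.
Proof. bij (fun v => (2 * fst v - 5 * snd v, 6 * fst v + snd v)%Z) (fun w => ((fst w + 5 * snd w) / 32, (snd w - 3 * fst w) / 16)%Z). Qed.
Lemma bij_d2 q K : TS q Tc2 Ec2 K = TS q Pd2 EL1 K.
Proof. bij (fun v => (fst v - 10 * snd v, - (3 * fst v + 2 * snd v))%Z) (fun w => ((fst w - 5 * snd w) / 16, (- snd w - 3 * fst w) / 32)%Z). Qed.
Lemma bij_d3 q K : TS q Tc3 Ec3 K = TS q Pd3 EL1 K.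
Proof. bij (fun v => (2 * fst v - 5 * snd v, - (6 * fst v + snd v))%Z) (fun w => ((fst w - 5 * snd w) / 32, (- snd w - 3 * fst w) / 16)%Z). Qed.

Definition Qa v := PL1 v && Ra v.
Definition Qb v := PL1 v && Rb v.
Definition Qc v := PL1 v && Rc v.
Definition Qd v := PL1 v && Rd v.
Definition Q1 v := PL1 v && negb (Ra v).
Definition Q2 v := PL1 v && negb (Ra v) && negb (Rb v).
Definition Qc' v := PL1 v && Rc v && negb ((fst v + 5 * snd v) mod 16 =? 8)%Z.
Definition Qd' v := PL1 v && Rd v && negb ((fst v - 5 * snd v) mod 16 =? 8)%Z.

Ltac unfq := unfold Qa, Qb, Qc, Qd, Q1, Q2, Qc', Qd' in *; unf1.
Ltac dopart := apply TS_part; unfq; part.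

Lemma part1 q K : TS q PL1 EL1 K = TS q Pa1 EL1 K + TS q Pa2 EL1 K + TS q Pb1 EL1 K + TS q Pb2 EL1 K
  + TS q Pc1 EL1 K + TS q Pc2 EL1 K + TS q Pc3 EL1 K + TS q Pd1 EL1 K + TS q Pd2 EL1 K + TS q Pd3 EL1 K.
Proof.
  rewrite (TS_part q PL1 Qa Q1) by (unfq; part).
  rewrite (TS_part q Q1 Qb Q2) by (unfq; part).
  rewrite (TS_part q Q2 Qc Qd) by (unfq; part).
  rewrite (TS_part q Qa Pa1 Pa2) by (unfq; part).
  rewrite (TS_part q Qb Pb1 Pb2) by (unfq; part).
  rewrite (TS_part q Qc Pc1 Qc') by (unfq; part).
  rewrite (TS_part q Qc' Pc2 Pc3) by (unfq; part).
  rewrite (TS_part q Qd Pd1 Qd') by (unfq; part).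
  rewrite (TS_part q Qd' Pd2 Pd3) by (unfq; part).
  ring.
Qed.

Lemma part_oo q K : TS q Soo Eoo K = TS q Soo2 Eoo K + TS q Soo0 Eoo K.
Proof. apply TS_part; unf1; part. Qed.

Lemma ident1_K q K : TS q PL1 EL1 K = 2 * TS q Ta1 Ea1 K + 2 * TS q Ta2 Ea2 K + TS q Soo Eoo K
   + 2 * TS q Tc2 Ec2 K + 2 * TS q Tc3 Ec3 K.
Proof. rewrite part1, part_oo, <- bij_a1, <- bij_a2, <- bij_b1, <- bij_b2, <- bij_c1, <- bij_c2, <- bij_c3,
  <- bij_d1, <- bij_d2, <- bij_d3, <- bij_c1', <- bij_d1'. ring. Qed.


Lemma cancel4 (a b : C) : 4 * a = 4 * b -> a = b.
Proof. intros H. assert (H4 : (4 : C) <> 0). { intro E. apply RtoC_inj in E. lra. }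
  replace a with (/ 4 * (4 * a)) by (field; exact H4). rewrite H. field; exact H4. Qed.

Section S1.
Variable q : C.
Hypothesis hq : (Cmod q < 1)%R.

Lemma lim_PL1 : filterlim (TS q PL1 EL1) eventually (locally (q ^ 0 * (2 * psi (q ^ 3)) * (2 * psi (q ^ 5)))).
Proof. unfold PL1, EL1. apply (TS_prod q od od 0 (fun x => 3 * t x)%nat (fun x => 5 * t x)%nat); auto.
  quad. apply psi_lim; auto; lia. apply psi_lim; auto; lia. Qed.

Ltac ps := apply psi_lim; auto; lia.
Ltac ph := apply phi_lim; auto; lia.

Lemma lim_Ta1 : filterlim (TS q Ta1 Ea1) eventually (locally (q ^ 0 * (2 * psi (q ^ 8)) * phi (q ^ 60))).
Proof. unfold Ta1, Ea1. apply (TS_prod q od (fun _ => true) 0 (fun x => 8 * t x)%nat (fun x => 60 * sq x)%nat); auto.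
  quad. ps. ph. Qed.
Lemma lim_Ta2 : filterlim (TS q Ta2 Ea2) eventually (locally (q ^ 14 * phi (q ^ 4) * (2 * psi (q ^ 120)))).
Proof. unfold Ta2, Ea2. apply (TS_prod q (fun _ => true) od 14 (fun x => 4 * sq x)%nat (fun x => 120 * t x)%nat); auto.
  quad. ph. ps. Qed.
Lemma lim_Soo : filterlim (TS q Soo Eoo) eventually (locally (q ^ 3 * (2 * psi (q ^ 12)) * (2 * psi (q ^ 20)))).
Proof. unfold Soo, Eoo. apply (TS_prod q od od 3 (fun x => 12 * t x)%nat (fun x => 20 * t x)%nat); auto.
  quad. ps. ps. Qed.
Lemma lim_Tc2 : filterlim (TS q Tc2 Ec2) eventually (locally (q ^ 5 * (2 * psi (q ^ 48)) * phi (q ^ 40))).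
Proof. unfold Tc2, Ec2. apply (TS_prod q od (fun _ => true) 5 (fun x => 48 * t x)%nat (fun x => 40 * sq x)%nat); auto.
  quad. ps. ph. Qed.
Lemma lim_Tc3 : filterlim (TS q Tc3 Ec3) eventually (locally (q ^ 9 * phi (q ^ 24) * (2 * psi (q ^ 80)))).
Proof. unfold Tc3, Ec3. apply (TS_prod q (fun _ => true) od 9 (fun x => 24 * sq x)%nat (fun x => 80 * t x)%nat); auto.
  quad. ph. ps. Qed.

Lemma ident1 : psi (q ^ 3) * psi (q ^ 5)
    = phi (q ^ 60) * psi (q ^ 8) + q ^ 14 * phi (q ^ 4) * psi (q ^ 120)
      + q ^ 3 * psi (q ^ 12) * psi (q ^ 20) + q ^ 5 * phi (q ^ 40) * psi (q ^ 48)
      + q ^ 9 * phi (q ^ 24) * psi (q ^ 80).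
Proof.
  assert (H := lim_PL1).
  assert (H2 : filterlim (TS q PL1 EL1) eventually (locally (
     2 * (q ^ 0 * (2 * psi (q ^ 8)) * phi (q ^ 60)) + 2 * (q ^ 14 * phi (q ^ 4) * (2 * psi (q ^ 120)))
     + q ^ 3 * (2 * psi (q ^ 12)) * (2 * psi (q ^ 20)) + 2 * (q ^ 5 * (2 * psi (q ^ 48)) * phi (q ^ 40))
     + 2 * (q ^ 9 * phi (q ^ 24) * (2 * psi (q ^ 80)))))).
  { eapply lim_ext. intros K; symmetry; apply ident1_K.
    apply lim_plus; [apply lim_plus; [apply lim_plus; [apply lim_plus|]|]|].
    - apply lim_mult; [apply lim_const| apply lim_Ta1].
    - apply lim_mult; [apply lim_const| apply lim_Ta2].
    - apply lim_Soo.
    - apply lim_mult; [apply lim_const| apply lim_Tc2].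
    - apply lim_mult; [apply lim_const| apply lim_Tc3]. }
  assert (E := lim_unique _ _ _ H H2). apply cancel4. change (q ^ 0) with (RtoC 1) in E.
  set (q14 := q ^ 14) in *. set (q3 := q ^ 3) in *. set (q5 := q ^ 5) in *. set (q9 := q ^ 9) in *.
  transitivity (1 * (2 * psi q3) * (2 * psi q5)). ring. rewrite E. ring.
Qed.
End S1.


Definition PL2 (v : Z * Z) := od (fst v) && od (snd v).
Definition EL2 (v : Z * Z) := (0 + 1 * t (fst v) + 15 * t (snd v))%nat.
Definition R2A (v : Z * Z) := ((fst v - snd v) mod 16 =? 0)%Z.
Definition R2B (v : Z * Z) := ((fst v + snd v) mod 16 =? 0)%Z.
Definition R2C (v : Z * Z) := ((fst v - snd v) mod 16 =? 8)%Z.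
Definition R2D (v : Z * Z) := ((fst v + snd v) mod 16 =? 8)%Z.
Definition R2E (v : Z * Z) := ((fst v - 3 * snd v) mod 8 =? 0)%Z.
Definition R2F (v : Z * Z) := ((fst v + 3 * snd v) mod 8 =? 0)%Z.
Definition PA1 v := PL2 v && R2A v && ((fst v + 15 * snd v) mod 32 =? 16)%Z.
Definition PA2 v := PL2 v && R2A v && ((fst v + 15 * snd v) mod 32 =? 0)%Z.
Definition PB1 v := PL2 v && R2B v && ((fst v - 15 * snd v) mod 32 =? 16)%Z.
Definition PB2 v := PL2 v && R2B v && ((fst v - 15 * snd v) mod 32 =? 0)%Z.
Definition PC v := PL2 v && R2C v.
Definition PD v := PL2 v && R2D v.
Definition PE1 v := PL2 v && R2E v && ((fst v + 5 * snd v) mod 16 =? 8)%Z.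
Definition PE2 v := PL2 v && R2E v && ((fst v + 5 * snd v) mod 16 =? 0)%Z.
Definition PF1 v := PL2 v && R2F v && ((fst v - 5 * snd v) mod 16 =? 8)%Z.
Definition PF2 v := PL2 v && R2F v && ((fst v - 5 * snd v) mod 16 =? 0)%Z.

Definition U1 (v : Z * Z) := od (fst v) && true.
Definition EU1 (v : Z * Z) := (0 + 16 * t (fst v) + 120 * sq (snd v))%nat.
Definition U2 (v : Z * Z) := true && od (snd v).
Definition EU2 (v : Z * Z) := (28 + 8 * sq (fst v) + 240 * t (snd v))%nat.
Definition M2 (v : Z * Z) := od (fst v) && true.
Definition EM2c (v : Z * Z) := (6 + 4 * t (fst v + 2 + 4 * snd v) + 60 * t (fst v))%nat.
Definition EM2d (v : Z * Z) := (6 + 4 * t (fst v + 2 + 4 * snd v) + 60 * t (- fst v))%nat.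
Definition S2 (v : Z * Z) := od (fst v) && od (snd v).
Definition S22 (v : Z * Z) := od (fst v) && od (snd v) && ((fst v - snd v) mod 4 =? 2)%Z.
Definition S20 (v : Z * Z) := od (fst v) && od (snd v) && negb ((fst v - snd v) mod 4 =? 2)%Z.
Definition ES2 (v : Z * Z) := (6 + 4 * t (fst v) + 60 * t (snd v))%nat.
Definition V1 (v : Z * Z) := od (fst v) && true.
Definition EV1 (v : Z * Z) := (1 + 24 * t (fst v) + 20 * sq (snd v))%nat.
Definition V2 (v : Z * Z) := true && od (snd v).
Definition EV2 (v : Z * Z) := (3 + 12 * sq (fst v) + 40 * t (snd v))%nat.

Ltac unf2 := unfold PA1, PA2, PB1, PB2, PC, PD, PE1, PE2, PF1, PF2, PL2, EL2, R2A, R2B, R2C, R2D, R2E, R2F,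
  U1, EU1, U2, EU2, M2, EM2c, EM2d, S2, S22, S20, ES2, V1, EV1, V2, EV2 in *.

Ltac bij2 ff gg := apply TS_bij with (f := ff) (g := gg); unf2;
  [first [quad|quadm]|quad| intros [x y] H; bsimpl; split; [zsolve|expo] | intros [x y] H; bsimpl; split; [zsolve| f_equal; zsolve]
   | intros [x y] H; bsimpl; f_equal; zsolve].

Lemma bij2_A1 q K : TS q U1 EU1 K = TS q PA1 EL2 K.
Proof. bij2 (fun v => (fst v + 30 * snd v, fst v - 2 * snd v)%Z) (fun w => ((fst w + 15 * snd w) / 16, (fst w - snd w) / 32)%Z). Qed.
Lemma bij2_B1 q K : TS q U1 EU1 K = TS q PB1 EL2 K.
Proof. bij2 (fun v => (fst v + 30 * snd v, - (fst v - 2 * snd v))%Z) (fun w => ((fst w - 15 * snd w) / 16, (fst w + snd w) / 32)%Z). Qed.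
Lemma bij2_A2 q K : TS q U2 EU2 K = TS q PA2 EL2 K.
Proof. bij2 (fun v => (2 * fst v + 15 * snd v, 2 * fst v - snd v)%Z) (fun w => ((fst w + 15 * snd w) / 32, (fst w - snd w) / 16)%Z). Qed.
Lemma bij2_B2 q K : TS q U2 EU2 K = TS q PB2 EL2 K.
Proof. bij2 (fun v => (2 * fst v + 15 * snd v, - (2 * fst v - snd v))%Z) (fun w => ((fst w - 15 * snd w) / 32, (fst w + snd w) / 16)%Z). Qed.
Lemma bij2_C q K : TS q M2 EM2c K = TS q PC EL2 K.
Proof. bij2 (fun v => (8 * fst v + 1 + 2 * snd v, 1 + 2 * snd v)%Z) (fun w => ((fst w - snd w) / 8, (snd w - 1) / 2)%Z). Qed.
Lemma bij2_C' q K : TS q M2 EM2c K = TS q S22 ES2 K.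
Proof. bij2 (fun v => (fst v + 2 + 4 * snd v, fst v)%Z) (fun w => (snd w, (fst w - snd w - 2) / 4)%Z). Qed.
Lemma bij2_D q K : TS q M2 EM2d K = TS q PD EL2 K.
Proof. bij2 (fun v => (8 * fst v + 1 + 2 * snd v, - (1 + 2 * snd v))%Z) (fun w => ((fst w + snd w) / 8, (- snd w - 1) / 2)%Z). Qed.
Lemma bij2_D' q K : TS q M2 EM2d K = TS q S20 ES2 K.
Proof. bij2 (fun v => (fst v + 2 + 4 * snd v, - fst v)%Z) (fun w => (- snd w, (fst w + snd w - 2) / 4)%Z). Qed.
Lemma bij2_E1 q K : TS q V1 EV1 K = TS q PE1 EL2 K.
Proof. bij2 (fun v => (3 * fst v + 10 * snd v, fst v - 2 * snd v)%Z) (fun w => ((fst w + 5 * snd w) / 8, (fst w - 3 * snd w) / 16)%Z). Qed.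
Lemma bij2_F1 q K : TS q V1 EV1 K = TS q PF1 EL2 K.
Proof. bij2 (fun v => (3 * fst v + 10 * snd v, - (fst v - 2 * snd v))%Z) (fun w => ((fst w - 5 * snd w) / 8, (fst w + 3 * snd w) / 16)%Z). Qed.
Lemma bij2_E2 q K : TS q V2 EV2 K = TS q PE2 EL2 K.
Proof. bij2 (fun v => (6 * fst v + 5 * snd v, 2 * fst v - snd v)%Z) (fun w => ((fst w + 5 * snd w) / 16, (fst w - 3 * snd w) / 8)%Z). Qed.
Lemma bij2_F2 q K : TS q V2 EV2 K = TS q PF2 EL2 K.
Proof. bij2 (fun v => (6 * fst v + 5 * snd v, - (2 * fst v - snd v))%Z) (fun w => ((fst w - 5 * snd w) / 16, (fst w + 3 * snd w) / 8)%Z). Qed.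

Definition QA v := PL2 v && R2A v.
Definition QB v := PL2 v && R2B v.
Definition QE v := PL2 v && R2E v.
Definition QF v := PL2 v && R2F v.
Definition Qn1 v := PL2 v && negb (R2A v).
Definition Qn2 v := PL2 v && negb (R2A v) && negb (R2B v).
Definition Qn3 v := PL2 v && negb (R2A v) && negb (R2B v) && negb (R2C v).
Definition Qn4 v := PL2 v && negb (R2A v) && negb (R2B v) && negb (R2C v) && negb (R2D v).

Ltac unfq2 := unfold QA, QB, QE, QF, Qn1, Qn2, Qn3, Qn4 in *; unf2.

Lemma part2 q K : TS q PL2 EL2 K = TS q PA1 EL2 K + TS q PA2 EL2 K + TS q PB1 EL2 K + TS q PB2 EL2 K
  + TS q PC EL2 K + TS q PD EL2 K + TS q PE1 EL2 K + TS q PE2 EL2 K + TS q PF1 EL2 K + TS q PF2 EL2 K.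
Proof.
  rewrite (TS_part q PL2 QA Qn1) by (unfq2; part).
  rewrite (TS_part q Qn1 QB Qn2) by (unfq2; part).
  rewrite (TS_part q Qn2 PC Qn3) by (unfq2; part).
  rewrite (TS_part q Qn3 PD Qn4) by (unfq2; part).
  rewrite (TS_part q Qn4 QE QF) by (unfq2; part).
  rewrite (TS_part q QA PA1 PA2) by (unfq2; part).
  rewrite (TS_part q QB PB1 PB2) by (unfq2; part).
  rewrite (TS_part q QE PE1 PE2) by (unfq2; part).
  rewrite (TS_part q QF PF1 PF2) by (unfq2; part).
  ring.
Qed.

Lemma part2_oo q K : TS q S2 ES2 K = TS q S22 ES2 K + TS q S20 ES2 K.
Proof. apply TS_part; unf2; part. Qed.

Lemma ident2_K q K : TS q PL2 EL2 K = 2 * TS q U1 EU1 K + 2 * TS q U2 EU2 K + TS q S2 ES2 K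
   + 2 * TS q V1 EV1 K + 2 * TS q V2 EV2 K.
Proof. rewrite part2, part2_oo, <- bij2_A1, <- bij2_A2, <- bij2_B1, <- bij2_B2, <- bij2_C, <- bij2_D,
  <- bij2_E1, <- bij2_E2, <- bij2_F1, <- bij2_F2, <- bij2_C', <- bij2_D'. ring. Qed.


Section S2.
Variable q : C.
Hypothesis hq : (Cmod q < 1)%R.
Ltac ps := apply psi_lim; auto; lia.
Ltac ph := apply phi_lim; auto; lia.

Lemma lim_PL2 : filterlim (TS q PL2 EL2) eventually (locally (q ^ 0 * (2 * psi (q ^ 1)) * (2 * psi (q ^ 15)))).
Proof. unfold PL2, EL2. apply (TS_prod q od od 0 (fun x => 1 * t x)%nat (fun x => 15 * t x)%nat); auto.
  quad. ps. ps. Qed.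
Lemma lim_U1 : filterlim (TS q U1 EU1) eventually (locally (q ^ 0 * (2 * psi (q ^ 16)) * phi (q ^ 120))).
Proof. unfold U1, EU1. apply (TS_prod q od (fun _ => true) 0 (fun x => 16 * t x)%nat (fun x => 120 * sq x)%nat); auto.
  quad. ps. ph. Qed.
Lemma lim_U2 : filterlim (TS q U2 EU2) eventually (locally (q ^ 28 * phi (q ^ 8) * (2 * psi (q ^ 240)))).
Proof. unfold U2, EU2. apply (TS_prod q (fun _ => true) od 28 (fun x => 8 * sq x)%nat (fun x => 240 * t x)%nat); auto.
  quad. ph. ps. Qed.
Lemma lim_S2 : filterlim (TS q S2 ES2) eventually (locally (q ^ 6 * (2 * psi (q ^ 4)) * (2 * psi (q ^ 60)))).
Proof. unfold S2, ES2. apply (TS_prod q od od 6 (fun x => 4 * t x)%nat (fun x => 60 * t x)%nat); auto.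
  quad. ps. ps. Qed.
Lemma lim_V1 : filterlim (TS q V1 EV1) eventually (locally (q ^ 1 * (2 * psi (q ^ 24)) * phi (q ^ 20))).
Proof. unfold V1, EV1. apply (TS_prod q od (fun _ => true) 1 (fun x => 24 * t x)%nat (fun x => 20 * sq x)%nat); auto.
  quad. ps. ph. Qed.
Lemma lim_V2 : filterlim (TS q V2 EV2) eventually (locally (q ^ 3 * phi (q ^ 12) * (2 * psi (q ^ 40)))).
Proof. unfold V2, EV2. apply (TS_prod q (fun _ => true) od 3 (fun x => 12 * sq x)%nat (fun x => 40 * t x)%nat); auto.
  quad. ph. ps. Qed.

Lemma ident2 : psi q * psi (q ^ 15)
    = phi (q ^ 120) * psi (q ^ 16) + q ^ 28 * phi (q ^ 8) * psi (q ^ 240)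
      + q ^ 6 * psi (q ^ 4) * psi (q ^ 60) + q * phi (q ^ 20) * psi (q ^ 24)
      + q ^ 3 * phi (q ^ 12) * psi (q ^ 40).
Proof.
  assert (H := lim_PL2).
  assert (H2 : filterlim (TS q PL2 EL2) eventually (locally (
     2 * (q ^ 0 * (2 * psi (q ^ 16)) * phi (q ^ 120)) + 2 * (q ^ 28 * phi (q ^ 8) * (2 * psi (q ^ 240)))
     + q ^ 6 * (2 * psi (q ^ 4)) * (2 * psi (q ^ 60)) + 2 * (q ^ 1 * (2 * psi (q ^ 24)) * phi (q ^ 20))
     + 2 * (q ^ 3 * phi (q ^ 12) * (2 * psi (q ^ 40)))))).
  { eapply lim_ext. intros K; symmetry; apply ident2_K.
    apply lim_plus; [apply lim_plus; [apply lim_plus; [apply lim_plus|]|]|].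
    - apply lim_mult; [apply lim_const| apply lim_U1].
    - apply lim_mult; [apply lim_const| apply lim_U2].
    - apply lim_S2.
    - apply lim_mult; [apply lim_const| apply lim_V1].
    - apply lim_mult; [apply lim_const| apply lim_V2]. }
  assert (E := lim_unique _ _ _ H H2). apply cancel4. change (q ^ 0) with (RtoC 1) in E.
  rewrite Cpow_1_r in E.
  set (q28 := q ^ 28) in *. set (q3 := q ^ 3) in *. set (q6 := q ^ 6) in *. set (q15 := q ^ 15) in *.
  transitivity (1 * (2 * psi q) * (2 * psi q15)). ring. rewrite E. ring.
Qed.
End S2.

Theorem lemma6p2 (q : C) (hq : (Cmod q < 1)%R) :
  psi (q ^ 3) * psi (q ^ 5)
    = phi (q ^ 60) * psi (q ^ 8) + q ^ 14 * phi (q ^ 4) * psi (q ^ 120)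
      + q ^ 3 * psi (q ^ 12) * psi (q ^ 20) + q ^ 5 * phi (q ^ 40) * psi (q ^ 48)
      + q ^ 9 * phi (q ^ 24) * psi (q ^ 80)
  /\
  psi q * psi (q ^ 15)
    = phi (q ^ 120) * psi (q ^ 16) + q ^ 28 * phi (q ^ 8) * psi (q ^ 240)
      + q ^ 6 * psi (q ^ 4) * psi (q ^ 60) + q * phi (q ^ 20) * psi (q ^ 24)
      + q ^ 3 * phi (q ^ 12) * psi (q ^ 40).
Proof. split. apply ident1; auto. apply ident2; auto. Qed.
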